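(* For a semiring $(S,+,\cdot)$ the following are equivalent: (i) $S$ is a quasi completely regular semiring and $E^+(S)$ is a subsemigroup of $(S,+)$; (ii) $S$ is additively quasi regular, $b^2\,\mathscr{H}^{*^{+}}\,b$ for all $b\in S$, for all $a,x\in S$ $a=a+x+a$ implies $a=a+2x+2a$, and $Reg^+S$ is a subsemigroup of $(S,+)$; (iii) $S$ is a b-lattice of nil-extensions of rectangular skew-rings and $E^+(S)$ is a subsemigroup of $(S,+)$.
   Context: A semiring $(S,+,\cdot)$ has two associative operations with $a(b+c)=ab+ac$, $(b+c)a=ba+ca$. $na$ is the $n$-fold sum of $a$; $b^2=b\cdot b$. $E^+(S)$ is the set of additive idempotents; $Reg^+S$ is the set of additively regular elements, where $a$ is additively regular if $a=a+x+a$ for some $x\in S$. $S$ is additively quasi regular if for each $a$ some $na$ is additively regular. $a$ is completely regular if there is $x$ with $a=a+x+a$, $a+x=x+a$, $a(a+x)=a+x$; $S$ is quasi completely regular if for each $a$ some $na$ is completely regular. Green's relations of $(S,+)$: $\mathscr{L}^+,\mathscr{R}^+,\mathscr{J}^+$. For additively quasi regular $S$, $m(a)$ is the least positive integer with $m(a)a$ additively regular; $a\,\mathscr{L}^{*^{+}}\,b$ iff $m(a)a\,\mathscr{L}^+\,m(b)b$, $a\,\mathscr{R}^{*^{+}}\,b$ iff $m(a)a\,\mathscr{R}^+\,m(b)b$, $\mathscr{H}^{*^{+}}=\mathscr{L}^{*^{+}}\cap\mathscr{R}^{*^{+}}$. A completely simple semiring: all elements completely regular and $\mathscr{J}^+=S\times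 S$. A rectangular skew-ring: completely simple semiring $K$ with $E^+(K)$ a subsemigroup of $(K,+)$. $S$ is a nil-extension of a subsemiring $K$ if $K$ is a bi-ideal ($a\in K,x\in S\Rightarrow a+x,x+a,ax,xa\in K$) and every $a\in S$ has some $na\in K$. A b-lattice is a semiring with $(S,\cdot)$ a band and $(S,+)$ a semilattice; $S$ is a b-lattice of semirings of a class if there is a congruence $\rho$ with $S/\rho$ a b-lattice and each $\rho$-class a subsemiring in that class. *)

(* Defs.v *)
(* No zero, no identity, no commutativity of + is assumed (as in the paper). *)
From Stdlib Require Import Arith.

Set Implicit Arguments.

Section Semiring.
Context {T : Type} (add mul : T -> T -> T).

Local Infix "+" := add.
Local Infix "*" := mul.

Definition is_semiring : Prop :=
  (forall a b c, a + (b + c) = (a + b) + c) /\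
  (forall a b c, a * (b * c) = (a * b) * c) /\
  (forall a b c, a * (b + c) = a * b + a * c) /\
  (forall a b c, (b + c) * a = b * a + c * a).

(* n-fold sum n a = a + ... + a (n terms), meaningful for n >= 1 *)
Fixpoint nsum (n : nat) (a : T) : T :=
  match n with
  | O => a
  | S k => match k with O => a | _ => nsum k a + a end
  end.

Definition closed_add (P : T -> Prop) : Prop :=
  forall a b, P a -> P b -> P (a + b).

Definition subsemiring (P : T -> Prop) : Prop :=
  closed_add P /\ (forall a b, P a -> P b -> P (a * b)).

Definition Eplus (P : T -> Prop) (a : T) : Prop := P a /\ a + a = a.

Definition add_regular (a : T) : Prop := exists x, a = a + x + a.

Definition RegPlus (a : T) : Prop := add_regular a.

Definition add_quasi_regular : Prop :=
  forall a, exists n, 0 < n /\ add_regular (nsum n a).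

Definition cregular_in (P : T -> Prop) (a : T) : Prop :=
  exists x, P x /\ a = a + x + a /\ a + x = x + a /\ a * (a + x) = a + x.

Definition quasi_completely_regular : Prop :=
  forall a, exists n, 0 < n /\ cregular_in (fun _ => True) (nsum n a).

(* principal ideals of the semigroup (P,+):  c in P^1 + a,  a + P^1,  P^1 + a + P^1 *)
Definition in_left_ideal (P : T -> Prop) (a c : T) : Prop :=
  c = a \/ exists u, P u /\ c = u + a.
Definition in_right_ideal (P : T -> Prop) (a c : T) : Prop :=
  c = a \/ exists u, P u /\ c = a + u.
Definition in_ideal (P : T -> Prop) (a c : T) : Prop :=
  c = a \/ (exists u, P u /\ c = u + a) \/ (exists v, P v /\ c = a + v)
  \/ (exists u v, P u /\ P v /\ c = u + a + v).

Definition Lplus (a b : T) : Prop :=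
  forall c, in_left_ideal (fun _ => True) a c <-> in_left_ideal (fun _ => True) b c.
Definition Rplus (a b : T) : Prop :=
  forall c, in_right_ideal (fun _ => True) a c <-> in_right_ideal (fun _ => True) b c.
Definition Jplus_in (P : T -> Prop) (a b : T) : Prop :=
  forall c, in_ideal P a c <-> in_ideal P b c.

Definition is_m (a : T) (n : nat) : Prop :=
  0 < n /\ add_regular (nsum n a) /\
  (forall k, 0 < k -> k < n -> ~ add_regular (nsum k a)).

Definition Lstar (a b : T) : Prop :=
  exists n m, is_m a n /\ is_m b m /\ Lplus (nsum n a) (nsum m b).
Definition Rstar (a b : T) : Prop :=
  exists n m, is_m a n /\ is_m b m /\ Rplus (nsum n a) (nsum m b).
Definition Hstar (a b : T) : Prop := Lstar a b /\ Rstar a b.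

Definition completely_simple (K : T -> Prop) : Prop :=
  subsemiring K /\
  (forall a, K a -> cregular_in K a) /\
  (forall a b, K a -> K b -> Jplus_in K a b).

Definition rect_skew_ring (K : T -> Prop) : Prop :=
  completely_simple K /\ closed_add (Eplus K).

Definition nil_extension (Q K : T -> Prop) : Prop :=
  subsemiring K /\ (forall a, K a -> Q a) /\
  (forall a x, K a -> Q x ->
     K (a + x) /\ K (x + a) /\ K (a * x) /\ K (x * a)) /\
  (forall a, Q a -> exists n, 0 < n /\ K (nsum n a)).

Definition blattice_of_nilext_rsr : Prop :=
  exists rho : T -> T -> Prop,
    (forall a, rho a a) /\
    (forall a b, rho a b -> rho b a) /\
    (forall a b c, rho a b -> rho b c -> rho a c) /\
    (forall a b c d, rho a b -> rho c d -> rho (a + c) (b + d)) /\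
    (forall a b c d, rho a b -> rho c d -> rho (a * c) (b * d)) /\
    (* S/rho is a b-lattice: (S/rho,.) band, (S/rho,+) semilattice *)
    (forall a, rho (a * a) a) /\
    (forall a, rho (a + a) a) /\
    (forall a b, rho (a + b) (b + a)) /\
    (forall a, subsemiring (rho a) /\
       exists K : T -> Prop, rect_skew_ring K /\ nil_extension (rho a) K).

End Semiring.

(* Main.v *)
Require Import Defs.
From Stdlib Require Import Arith Lia Classical ClassicalEpsilon.

Section Basics.
Context {T : Type} (add mul : T -> T -> T).
Local Infix "⊕" := add (at level 50, left associativity).
Local Infix "⊗" := mul (at level 40, left associativity).
Hypothesis aA : forall a b c, a ⊕ (b ⊕ c) = a ⊕ b ⊕ c.
Hypothesis mA : forall a b c, a ⊗ (b ⊗ c) = a ⊗ b ⊗ c.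
Hypothesis dL : forall a b c, a ⊗ (b ⊕ c) = a ⊗ b ⊕ a ⊗ c.
Hypothesis dR : forall a b c, (b ⊕ c) ⊗ a = b ⊗ a ⊕ c ⊗ a.

Local Notation ns := (nsum add).

Ltac ae := repeat rewrite aA; reflexivity.

Lemma ns_S n a : 0 < n -> ns (S n) a = ns n a ⊕ a.
Proof. intros H; destruct n; [lia | reflexivity]. Qed.

Lemma ns_1 a : ns 1 a = a. Proof. reflexivity. Qed.

Lemma ns_add p q a : 0 < p -> 0 < q -> ns (p + q) a = ns p a ⊕ ns q a.
Proof.
  intros Hp Hq. induction q as [|q IH]; [lia|].
  destruct q as [|q'].
  - rewrite Nat.add_1_r, ns_S by lia. reflexivity.
  - rewrite <- plus_n_Sm, ns_S by lia. rewrite IH by lia.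
    rewrite (ns_S (S q')) by lia. ae.
Qed.

Lemma ns_mul k m a : 0 < k -> 0 < m -> ns k (ns m a) = ns (k * m) a.
Proof.
  intros Hk Hm. induction k as [|k IH]; [lia|].
  destruct k as [|k'].
  - rewrite Nat.mul_1_l. reflexivity.
  - rewrite ns_S by lia. rewrite IH by lia.
    rewrite <- ns_add by nia. f_equal. lia.
Qed.

Lemma ns_comm k m a : 0 < k -> 0 < m -> ns k (ns m a) = ns m (ns k a).
Proof. intros; rewrite !ns_mul by lia. f_equal; lia. Qed.

Lemma mul_ns_l n c a : c ⊗ ns n a = ns n (c ⊗ a).
Proof.
  induction n as [|n IH]; [reflexivity|].
  destruct n as [|n']; [reflexivity|].
  rewrite !ns_S by lia. rewrite dL, IH. reflexivity.
Qed.

Lemma mul_ns_r n c a : ns n a ⊗ c = ns n (a ⊗ c).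
Proof.
  induction n as [|n IH]; [reflexivity|].
  destruct n as [|n']; [reflexivity|].
  rewrite !ns_S by lia. rewrite dR, IH. reflexivity.
Qed.

Lemma ns_idem n a : a ⊕ a = a -> ns n a = a.
Proof.
  intros H. induction n as [|n IH]; [reflexivity|].
  destruct n as [|n']; [reflexivity|].
  rewrite ns_S by lia. rewrite IH. exact H.
Qed.

Lemma ns_left n a : 0 < n -> ns (S n) a = a ⊕ ns n a.
Proof.
  intros H. replace (S n) with (1 + n) by lia. rewrite ns_add by lia. reflexivity.
Qed.

Definition grp (h c : T) : Prop :=
  h ⊕ h = h /\ h ⊕ c = c /\ c ⊕ h = c /\ exists y, c ⊕ y = h /\ y ⊕ c = h.

Lemma grp_ns h c k : grp h c -> 0 < k -> grp h (ns k c).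
Proof.
  intros Hg Hk. induction k as [|k IH]; [lia|].
  destruct k as [|k']; [exact Hg|].
  rewrite ns_S by lia. specialize (IH ltac:(lia)).
  destruct Hg as (Hh & H1 & H2 & y & Hy1 & Hy2).
  destruct IH as (_ & I1 & I2 & w & Hw1 & Hw2).
  set (z := ns (S k') c) in *.
  split; [exact Hh|]. split; [rewrite aA, I1; reflexivity|].
  split; [rewrite <- (aA z c h), H2; reflexivity|].
  exists (y ⊕ w). split.
  - transitivity (z ⊕ (c ⊕ y) ⊕ w); [ae|]. rewrite Hy1, I2. exact Hw1.
  - transitivity (y ⊕ (w ⊕ z) ⊕ c); [ae|]. rewrite Hw2. rewrite <- aA, H1. exact Hy2.
Qed.

Lemma grp_unique h h' c : grp h c -> grp h' c -> h = h'.
Proof.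
  intros (Hh & H1 & H2 & y & Hy1 & Hy2) (Hh' & H1' & H2' & y' & Hy1' & Hy2').
  assert (E1 : h = h' ⊕ h). { rewrite <- Hy1 at 2. rewrite aA, H1'. symmetry; exact Hy1. }
  assert (E2 : h' = h' ⊕ h). { rewrite <- Hy2'. rewrite <- aA, H2. reflexivity. }
  congruence.
Qed.

Definition Pe (a h : T) : Prop := exists n, 0 < n /\ grp h (ns n a).

Lemma Pe_unique a h h' : Pe a h -> Pe a h' -> h = h'.
Proof.
  intros (n & Hn & Hg) (m & Hm & Hg').
  apply (grp_unique h h' (ns m (ns n a))).
  - apply grp_ns; auto.
  - rewrite ns_comm by lia. apply grp_ns; auto.
Qed.

Lemma grp_Pe h c : grp h c -> Pe c h.
Proof. intros; exists 1; split; [lia|exact H]. Qed.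

Lemma idem_grp e : e ⊕ e = e -> grp e e.
Proof. intros H; repeat split; try exact H. exists e; split; exact H. Qed.

End Basics.

Section Band.
Context {T : Type} (add : T -> T -> T).
Local Infix "⊕" := add (at level 50, left associativity).
Hypothesis aA : forall a b c, a ⊕ (b ⊕ c) = a ⊕ b ⊕ c.
Ltac ae := repeat rewrite aA; reflexivity.

Lemma band_T3 x f g : x ⊕ f ⊕ x = x -> x ⊕ g ⊕ x = x ->
  (g ⊕ x ⊕ f) ⊕ (g ⊕ x ⊕ f) = g ⊕ x ⊕ f -> x ⊕ f ⊕ g ⊕ x = x.
Proof.
  intros H1 H2 H3.
  transitivity (x ⊕ f ⊕ g ⊕ (x ⊕ f ⊕ x)); [rewrite H1; reflexivity|].
  transitivity ((x ⊕ g ⊕ x) ⊕ f ⊕ g ⊕ (x ⊕ f ⊕ x)); [rewrite H2; reflexivity|].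
  transitivity (x ⊕ ((g ⊕ x ⊕ f) ⊕ (g ⊕ x ⊕ f)) ⊕ x); [ae|]. rewrite H3.
  transitivity ((x ⊕ g ⊕ x) ⊕ f ⊕ x); [ae|]. rewrite H2. exact H1.
Qed.

Lemma band_T1 e f g : e ⊕ f ⊕ e = e -> f ⊕ g ⊕ f = f ->
  (g ⊕ f ⊕ e) ⊕ (g ⊕ f ⊕ e) = g ⊕ f ⊕ e ->
  (e ⊕ f ⊕ e ⊕ g) ⊕ (e ⊕ f ⊕ e ⊕ g) = e ⊕ f ⊕ e ⊕ g ->
  e ⊕ g ⊕ e = e.
Proof.
  intros H1 H2 H3 H4.
  transitivity (e ⊕ g ⊕ (e ⊕ f ⊕ e)); [rewrite H1; reflexivity|].
  transitivity (e ⊕ g ⊕ e ⊕ (f ⊕ g ⊕ f) ⊕ e); [rewrite H2; ae|].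
  transitivity (e ⊕ g ⊕ e ⊕ f ⊕ ((g ⊕ f ⊕ e) ⊕ (g ⊕ f ⊕ e))); [rewrite H3; ae|].
  transitivity (e ⊕ g ⊕ e ⊕ f ⊕ e ⊕ g ⊕ f ⊕ e).
  { transitivity (e ⊕ g ⊕ e ⊕ (f ⊕ g ⊕ f) ⊕ e ⊕ g ⊕ f ⊕ e); [ae|]. rewrite H2; ae. }
  transitivity ((e ⊕ f ⊕ e) ⊕ g ⊕ e ⊕ f ⊕ e ⊕ g ⊕ f ⊕ e); [rewrite H1; ae|].
  transitivity (((e ⊕ f ⊕ e ⊕ g) ⊕ (e ⊕ f ⊕ e ⊕ g)) ⊕ f ⊕ e); [ae|]. rewrite H4.
  transitivity (e ⊕ (f ⊕ g ⊕ f) ⊕ e ⊕ g ⊕ f ⊕ e); [rewrite H2; ae|].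
  transitivity (e ⊕ f ⊕ ((g ⊕ f ⊕ e) ⊕ (g ⊕ f ⊕ e))); [ae|]. rewrite H3.
  transitivity (e ⊕ (f ⊕ g ⊕ f) ⊕ e); [ae|]. rewrite H2. exact H1.
Qed.

End Band.

Section PartI.
Context {T : Type} (add mul : T -> T -> T).
Local Infix "⊕" := add (at level 50, left associativity).
Local Infix "⊗" := mul (at level 40, left associativity).
Hypothesis aA : forall a b c, a ⊕ (b ⊕ c) = a ⊕ b ⊕ c.
Hypothesis mA : forall a b c, a ⊗ (b ⊗ c) = a ⊗ b ⊗ c.
Hypothesis dL : forall a b c, a ⊗ (b ⊕ c) = a ⊗ b ⊕ a ⊗ c.
Hypothesis dR : forall a b c, (b ⊕ c) ⊗ a = b ⊗ a ⊕ c ⊗ a.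
Hypothesis hQ : quasi_completely_regular add mul.
Hypothesis hE : closed_add add (Eplus add (fun _ : T => True)).

Local Notation ns := (nsum add).
Local Notation grp := (grp add).
Local Notation Pe := (Pe add).
Ltac ae := repeat rewrite aA; reflexivity.

Lemma Eadd e f : e ⊕ e = e -> f ⊕ f = f -> e ⊕ f ⊕ (e ⊕ f) = e ⊕ f.
Proof. intros He Hf. destruct (hE e f (conj I He) (conj I Hf)) as [_ H]. exact H. Qed.

Lemma exists_phi a : exists h, Pe a h /\ a ⊗ h = h.
Proof.
  destruct (hQ a) as (n & Hn & x & _ & H1 & H2 & H3).
  set (c := ns n a) in *. set (h := c ⊕ x).
  assert (Hg : grp h c).
  { unfold h. split; [|split; [|split]].
    - transitivity (c ⊕ x ⊕ c ⊕ x); [ae|]. rewrite <- H1. reflexivity.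
    - symmetry; exact H1.
    - rewrite H2, aA. symmetry; exact H1.
    - exists x. split; [reflexivity | symmetry; exact H2]. }
  exists h. split; [exists n; split; assumption|].
  assert (Hid : a ⊗ h ⊕ a ⊗ h = a ⊗ h).
  { rewrite <- dL. destruct Hg as [Hh _]. rewrite Hh. reflexivity. }
  assert (E1 : ns n (a ⊗ h) = h).
  { rewrite <- mul_ns_r by assumption. exact H3. }
  rewrite ns_idem in E1 by assumption. exact E1.
Qed.

Definition phi (a : T) : T := proj1_sig (constructive_indefinite_description _ (exists_phi a)).

Lemma phi_spec a : Pe a (phi a) /\ a ⊗ phi a = phi a.
Proof. unfold phi. destruct (constructive_indefinite_description _ _) as [h Hh]. exact Hh. Qed.

Lemma phi_Pe a : Pe a (phi a). Proof. apply phi_spec. Qed.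
Lemma phi_abs a : a ⊗ phi a = phi a. Proof. apply phi_spec. Qed.

Lemma phi_eq a h : Pe a h -> phi a = h.
Proof. intros H. apply (Pe_unique add aA a); [apply phi_Pe | exact H]. Qed.

Lemma phi_idem a : phi a ⊕ phi a = phi a.
Proof. destruct (phi_Pe a) as (n & _ & H & _). exact H. Qed.

Lemma phi_E e : e ⊕ e = e -> phi e = e.
Proof. intros H. apply phi_eq. apply grp_Pe. apply idem_grp; exact H. Qed.

Lemma E_mul e : e ⊕ e = e -> e ⊗ e = e.
Proof. intros H. pose proof (phi_abs e) as H1. rewrite phi_E in H1 by exact H. exact H1. Qed.

Lemma grp_mul_r h c t : grp h c -> grp (h ⊗ t) (c ⊗ t).
Proof.
  intros (Hh & H1 & H2 & y & Hy1 & Hy2).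
  split; [rewrite <- dR, Hh; reflexivity|].
  split; [rewrite <- dR, H1; reflexivity|].
  split; [rewrite <- dR, H2; reflexivity|].
  exists (y ⊗ t). split; rewrite <- dR; congruence.
Qed.

Lemma grp_mul_l h c t : grp h c -> grp (t ⊗ h) (t ⊗ c).
Proof.
  intros (Hh & H1 & H2 & y & Hy1 & Hy2).
  split; [rewrite <- dL, Hh; reflexivity|].
  split; [rewrite <- dL, H1; reflexivity|].
  split; [rewrite <- dL, H2; reflexivity|].
  exists (t ⊗ y). split; rewrite <- dL; congruence.
Qed.

Lemma phi_mul_l s t : phi (s ⊗ t) = phi s ⊗ t.
Proof.
  apply phi_eq. destruct (phi_Pe s) as (n & Hn & Hg).
  exists n. split; [exact Hn|]. rewrite <- mul_ns_r by exact dR. apply grp_mul_r; exact Hg.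
Qed.

Lemma phi_mul_r s t : phi (s ⊗ t) = s ⊗ phi t.
Proof.
  apply phi_eq. destruct (phi_Pe t) as (n & Hn & Hg).
  exists n. split; [exact Hn|]. rewrite <- mul_ns_l by exact dL. apply grp_mul_l; exact Hg.
Qed.

Lemma phi_phi a : phi (phi a) = phi a.
Proof. apply phi_E, phi_idem. Qed.

Lemma phi_mul s t : phi (s ⊗ t) = phi s ⊗ phi t.
Proof.
  rewrite phi_mul_l. rewrite <- (phi_phi s) at 1.
  rewrite <- (phi_mul_l (phi s) t). rewrite phi_mul_r. reflexivity.
Qed.

Lemma phi_sq a : phi (a ⊗ a) = phi a.
Proof. rewrite phi_mul_r. apply phi_abs. Qed.

Lemma phi_mul_idem a : phi a ⊗ phi a = phi a.
Proof. apply E_mul, phi_idem. Qed.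

Lemma phi_add a b : phi (a ⊕ b) = phi a ⊕ phi b.
Proof.
  rewrite <- (phi_abs (a ⊕ b)). rewrite dR.
  rewrite <- !phi_mul_r, !phi_mul_l, !dL.
  rewrite <- !phi_mul_l, !phi_sq, !phi_mul.
  pose proof (E_mul _ (Eadd _ _ (phi_idem a) (phi_idem b))) as H.
  rewrite dR, !dL, !phi_mul_idem in H. rewrite <- H. ae.
Qed.

Lemma phi_ns n a : 0 < n -> phi (ns n a) = phi a.
Proof.
  intros Hn. apply phi_eq. destruct (phi_Pe a) as (m & Hm & Hg).
  exists m. split; [exact Hm|]. rewrite ns_comm by assumption.
  apply grp_ns; assumption.
Qed.

Lemma phi_grp h c : grp h c -> phi c = h.
Proof. intros H. apply phi_eq, grp_Pe, H. Qed.

Lemma G0 z : add_regular add z -> grp (phi z) z.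
Proof.
  intros [w Hw].
  set (h := phi z).
  assert (Hf : z ⊕ w = h ⊕ phi w).
  { assert (Hi : z ⊕ w ⊕ (z ⊕ w) = z ⊕ w).
    { transitivity (z ⊕ w ⊕ z ⊕ w); [ae|]. rewrite <- Hw. reflexivity. }
    rewrite <- (phi_E _ Hi). rewrite phi_add. reflexivity. }
  assert (Hg : w ⊕ z = phi w ⊕ h).
  { assert (Hi : w ⊕ z ⊕ (w ⊕ z) = w ⊕ z).
    { transitivity (w ⊕ (z ⊕ w ⊕ z)); [ae|]. rewrite <- Hw. reflexivity. }
    rewrite <- (phi_E _ Hi). rewrite phi_add. reflexivity. }
  assert (Hh : h ⊕ phi w ⊕ h = h).
  { unfold h. rewrite <- !phi_add. rewrite <- Hw. reflexivity. }
  assert (Hhz : h ⊕ z = z).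
  { rewrite Hw at 1. transitivity (h ⊕ (z ⊕ w) ⊕ z); [ae|]. rewrite Hf.
    transitivity (h ⊕ h ⊕ phi w ⊕ z); [ae|]. unfold h; rewrite phi_idem. fold h.
    rewrite <- Hf. symmetry; exact Hw. }
  assert (Hzh : z ⊕ h = z).
  { rewrite Hw at 1. transitivity (z ⊕ (w ⊕ z) ⊕ h); [ae|]. rewrite Hg.
    transitivity (z ⊕ phi w ⊕ (h ⊕ h)); [ae|]. unfold h; rewrite phi_idem. fold h.
    transitivity (z ⊕ (phi w ⊕ h)); [ae|]. rewrite <- Hg.
    transitivity (z ⊕ w ⊕ z); [ae| symmetry; exact Hw]. }
  split; [apply phi_idem|]. split; [exact Hhz|]. split; [exact Hzh|].
  exists (h ⊕ w ⊕ h). split.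
  - transitivity (z ⊕ h ⊕ w ⊕ h); [ae|]. rewrite Hzh, Hf. exact Hh.
  - transitivity (h ⊕ w ⊕ (h ⊕ z)); [ae|]. rewrite Hhz.
    transitivity (h ⊕ (w ⊕ z)); [ae|]. rewrite Hg. rewrite aA. exact Hh.
Qed.


Ltac idem := repeat (apply Eadd); auto using phi_idem.

Definition le (e f : T) : Prop := e ⊕ f ⊕ e = e.
Definition Dr (e f : T) : Prop := le e f /\ le f e.
Definition rho (a b : T) : Prop := Dr (phi a) (phi b).

Lemma le_trans e f g : e ⊕ e = e -> f ⊕ f = f -> g ⊕ g = g ->
  le e f -> le f g -> le e g.
Proof.
  intros He Hf Hg H1 H2. unfold le in *.
  apply (band_T1 add aA e f g H1 H2); idem.
Qed.

Lemma le_meet x f g : x ⊕ x = x -> f ⊕ f = f -> g ⊕ g = g ->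
  le x f -> le x g -> le x (f ⊕ g).
Proof.
  intros Hx Hf Hg H1 H2. unfold le in *.
  rewrite aA. apply (band_T3 add aA x f g H1 H2); idem.
Qed.

Lemma le_refl e : e ⊕ e = e -> le e e.
Proof. intros H. unfold le. rewrite H; exact H. Qed.

Lemma le_sum_l e g : e ⊕ e = e -> g ⊕ g = g -> le (e ⊕ g) e.
Proof.
  intros He Hg. unfold le.
  transitivity (e ⊕ g ⊕ (e ⊕ e) ⊕ g); [ae|]. rewrite He.
  transitivity ((e ⊕ g) ⊕ (e ⊕ g)); [ae|]. idem.
Qed.

Lemma le_sum_r e g : e ⊕ e = e -> g ⊕ g = g -> le (e ⊕ g) g.
Proof.
  intros He Hg. unfold le.
  transitivity (e ⊕ (g ⊕ g) ⊕ e ⊕ g); [ae|]. rewrite Hg.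
  transitivity ((e ⊕ g) ⊕ (e ⊕ g)); [ae|]. idem.
Qed.

Lemma rho_refl a : rho a a.
Proof. split; apply le_refl, phi_idem. Qed.

Lemma rho_sym a b : rho a b -> rho b a.
Proof. intros [H1 H2]; split; assumption. Qed.

Lemma rho_trans a b c : rho a b -> rho b c -> rho a c.
Proof.
  intros [H1 H2] [H3 H4]. split.
  - apply (le_trans _ (phi b)); auto using phi_idem.
  - apply (le_trans _ (phi b)); auto using phi_idem.
Qed.

Lemma rho_add_r a b c : rho a b -> rho (a ⊕ c) (b ⊕ c).
Proof.
  intros [H1 H2]. unfold rho, Dr. rewrite !phi_add.
  pose proof (phi_idem a). pose proof (phi_idem b). pose proof (phi_idem c).
  split; apply le_meet; try idem.
  - apply (le_trans _ (phi a)); try idem; auto using le_sum_l, le_sum_r.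
  - apply le_sum_r; auto.
  - apply (le_trans _ (phi b)); try idem; auto using le_sum_l, le_sum_r.
  - apply le_sum_r; auto.
Qed.

Lemma rho_add_l a b c : rho a b -> rho (c ⊕ a) (c ⊕ b).
Proof.
  intros [H1 H2]. unfold rho, Dr. rewrite !phi_add.
  pose proof (phi_idem a). pose proof (phi_idem b). pose proof (phi_idem c).
  split; apply le_meet; try idem.
  - apply le_sum_l; auto.
  - apply (le_trans _ (phi a)); try idem; auto using le_sum_l, le_sum_r.
  - apply le_sum_l; auto.
  - apply (le_trans _ (phi b)); try idem; auto using le_sum_l, le_sum_r.
Qed.

Lemma rho_add a b c d : rho a b -> rho c d -> rho (a ⊕ c) (b ⊕ d).
Proof.
  intros H1 H2. apply (rho_trans _ (b ⊕ c)); [apply rho_add_r | apply rho_add_l]; assumption.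
Qed.

Lemma le_mul_r e f g : le e f -> le (e ⊗ g) (f ⊗ g).
Proof. unfold le. intros H. rewrite <- !dR, H. reflexivity. Qed.

Lemma le_mul_l e f g : le e f -> le (g ⊗ e) (g ⊗ f).
Proof. unfold le. intros H. rewrite <- !dL, H. reflexivity. Qed.

Lemma rho_mul a b c d : rho a b -> rho c d -> rho (a ⊗ c) (b ⊗ d).
Proof.
  intros [H1 H2] [H3 H4]. apply (rho_trans _ (b ⊗ c)); unfold rho, Dr; rewrite !phi_mul;
  split; auto using le_mul_r, le_mul_l.
Qed.

Lemma rho_sq a : rho (a ⊗ a) a.
Proof. unfold rho. rewrite phi_sq. apply rho_refl. Qed.

Lemma rho_2 a : rho (a ⊕ a) a.
Proof. unfold rho. rewrite phi_add, phi_idem. apply rho_refl. Qed.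

Lemma rho_comm a b : rho (a ⊕ b) (b ⊕ a).
Proof.
  unfold rho, Dr, le. rewrite !phi_add.
  pose proof (phi_idem a) as Ha. pose proof (phi_idem b) as Hb.
  split.
  - transitivity (phi a ⊕ (phi b ⊕ phi b) ⊕ (phi a ⊕ phi a) ⊕ phi b); [ae|].
    rewrite Ha, Hb. transitivity ((phi a ⊕ phi b) ⊕ (phi a ⊕ phi b)); [ae|]. idem.
  - transitivity (phi b ⊕ (phi a ⊕ phi a) ⊕ (phi b ⊕ phi b) ⊕ phi a); [ae|].
    rewrite Ha, Hb. transitivity ((phi b ⊕ phi a) ⊕ (phi b ⊕ phi a)); [ae|]. idem.
Qed.


Lemma grp_reg h c : grp h c -> add_regular add c.
Proof.
  intros (Hh & H1 & H2 & y & Hy1 & Hy2). exists y. rewrite Hy1. symmetry; exact H1.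
Qed.

Lemma grp_inv h c : grp h c -> exists y, grp h y /\ c ⊕ y = h /\ y ⊕ c = h.
Proof.
  intros (Hh & H1 & H2 & y & Hy1 & Hy2).
  exists (h ⊕ y ⊕ h). split; [|split].
  - split; [exact Hh|]. split; [rewrite !aA, Hh; reflexivity|].
    split; [rewrite <- aA, Hh; reflexivity|].
    exists c. split.
    + transitivity (h ⊕ y ⊕ (h ⊕ c)); [ae|]. rewrite H1.
      transitivity (h ⊕ (y ⊕ c)); [ae|]. rewrite Hy2; exact Hh.
    + transitivity (c ⊕ h ⊕ y ⊕ h); [ae|]. rewrite H2, Hy1; exact Hh.
  - transitivity (c ⊕ h ⊕ y ⊕ h); [ae|]. rewrite H2, Hy1; exact Hh.
  - transitivity (h ⊕ y ⊕ (h ⊕ c)); [ae|]. rewrite H1.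
    transitivity (h ⊕ (y ⊕ c)); [ae|]. rewrite Hy2; exact Hh.
Qed.

Lemma idem_reg e : e ⊕ e = e -> add_regular add e.
Proof. intros H. exists e. rewrite !H. reflexivity. Qed.

Lemma Hall a b : add_regular add a -> add_regular add b -> add_regular add (a ⊕ b).
Proof.
  intros [a' Ha] [b' Hb]. exists (b' ⊕ a').
  assert (I1 : (a' ⊕ a) ⊕ (a' ⊕ a) = a' ⊕ a).
  { transitivity (a' ⊕ (a ⊕ a' ⊕ a)); [ae|]. rewrite <- Ha. reflexivity. }
  assert (I2 : (b ⊕ b') ⊕ (b ⊕ b') = b ⊕ b').
  { transitivity (b ⊕ b' ⊕ b ⊕ b'); [ae|]. rewrite <- Hb. reflexivity. }
  pose proof (Eadd _ _ I1 I2) as I3.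
  assert (Ea : a = a ⊕ (a' ⊕ a)) by (rewrite aA; exact Ha).
  assert (Eb : b = (b ⊕ b') ⊕ b) by exact Hb.
  symmetry. transitivity (a ⊕ (b ⊕ b') ⊕ (a' ⊕ a) ⊕ b); [ae|].
  transitivity ((a ⊕ (a' ⊕ a)) ⊕ (b ⊕ b') ⊕ (a' ⊕ a) ⊕ ((b ⊕ b') ⊕ b)).
  { rewrite <- Ea, <- Eb. reflexivity. }
  transitivity (a ⊕ ((a' ⊕ a ⊕ (b ⊕ b')) ⊕ (a' ⊕ a ⊕ (b ⊕ b'))) ⊕ b); [ae|].
  rewrite I3. transitivity ((a ⊕ (a' ⊕ a)) ⊕ ((b ⊕ b') ⊕ b)); [ae|].
  rewrite <- Ea, <- Eb. reflexivity.
Qed.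

Lemma reg_mul_r b x : add_regular add b -> add_regular add (b ⊗ x).
Proof. intros [w Hw]. exists (w ⊗ x). rewrite <- !dR, <- Hw. reflexivity. Qed.

Lemma reg_mul_l b x : add_regular add b -> add_regular add (x ⊗ b).
Proof. intros [w Hw]. exists (x ⊗ w). rewrite <- !dL, <- Hw. reflexivity. Qed.

Lemma rdiv x : exists t, x ⊕ t = phi x.
Proof.
  destruct (phi_Pe x) as (n & Hn & Hg). destruct Hg as (_ & _ & _ & y & Hy1 & _).
  destruct n as [|n']; [lia|]. destruct n' as [|n''].
  - exists y. exact Hy1.
  - exists (ns (S n'') x ⊕ y). rewrite aA, <- ns_left by (exact aA || lia). exact Hy1.
Qed.

Lemma ldiv x : exists t, t ⊕ x = phi x.
Proof.
  destruct (phi_Pe x) as (n & Hn & Hg). destruct Hg as (_ & _ & _ & y & _ & Hy2).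
  destruct n as [|n']; [lia|]. destruct n' as [|n''].
  - exists y. exact Hy2.
  - exists (y ⊕ ns (S n'') x). rewrite <- aA, <- ns_S by lia. exact Hy2.
Qed.

Lemma reg_add_right b x : add_regular add b -> le (phi b) (phi x) -> add_regular add (b ⊕ x).
Proof.
  intros Hb Hle. unfold le in Hle.
  destruct (G0 b Hb) as (Hh & H1 & H2 & y & Hy1 & Hy2).
  destruct (rdiv x) as [t Ht].
  set (pb := phi b) in *. set (px := phi x) in *.
  assert (C1 : pb ⊕ px ⊕ (b ⊕ x) = b ⊕ x).
  { rewrite <- H1 at 1. transitivity ((pb ⊕ px ⊕ pb) ⊕ b ⊕ x); [ae|]. rewrite Hle, H1. reflexivity. }
  assert (C2 : b ⊕ x ⊕ (t ⊕ pb ⊕ y ⊕ px) = pb ⊕ px).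
  { transitivity (b ⊕ (x ⊕ t) ⊕ pb ⊕ y ⊕ px); [ae|]. rewrite Ht.
    rewrite <- H2 at 1. transitivity (b ⊕ (pb ⊕ px ⊕ pb) ⊕ y ⊕ px); [ae|]. rewrite Hle, H2.
    rewrite Hy1. reflexivity. }
  exists (t ⊕ pb ⊕ y ⊕ px). rewrite C2. symmetry; exact C1.
Qed.

Lemma reg_add_left b x : add_regular add b -> le (phi b) (phi x) -> add_regular add (x ⊕ b).
Proof.
  intros Hb Hle. unfold le in Hle.
  destruct (G0 b Hb) as (Hh & H1 & H2 & y & Hy1 & Hy2).
  destruct (ldiv x) as [t Ht].
  set (pb := phi b) in *. set (px := phi x) in *.
  assert (C1 : x ⊕ b ⊕ (px ⊕ pb) = x ⊕ b).
  { rewrite <- H2 at 1. transitivity (x ⊕ b ⊕ (pb ⊕ px ⊕ pb)); [ae|]. rewrite Hle.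
    rewrite <- aA, H2. reflexivity. }
  assert (C2 : px ⊕ y ⊕ pb ⊕ t ⊕ (x ⊕ b) = px ⊕ pb).
  { transitivity (px ⊕ y ⊕ pb ⊕ (t ⊕ x) ⊕ b); [ae|]. rewrite Ht.
    rewrite <- H1. transitivity (px ⊕ y ⊕ (pb ⊕ px ⊕ pb) ⊕ b); [ae|]. rewrite Hle.
    rewrite <- (aA _ pb b), H1. rewrite <- aA, Hy2. reflexivity. }
  exists (px ⊕ y ⊕ pb ⊕ t). symmetry.
  transitivity (x ⊕ b ⊕ (px ⊕ y ⊕ pb ⊕ t ⊕ (x ⊕ b))); [ae|].
  rewrite C2. exact C1.
Qed.

Lemma exists_is_m a : (exists n, 0 < n /\ add_regular add (ns n a)) -> exists m, is_m add a m.
Proof.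
  intros [n [Hn Hr]]. apply NNPP. intros Hno.
  assert (Hall : forall N k, k <= N -> 0 < k -> ~ add_regular add (ns k a)).
  { induction N as [|N IH]; intros k Hk Hk0; [lia|].
    destruct (Nat.eq_dec k (S N)) as [->|Hne]; [|apply IH; lia].
    intros Hreg. apply Hno. exists (S N). split; [lia|]. split; [exact Hreg|].
    intros j Hj0 Hj. apply IH; lia. }
  exact (Hall n n (le_n n) Hn Hr).
Qed.

Lemma li_sub u v s : u = s ⊕ v -> forall c,
  in_left_ideal add (fun _ => True) u c -> in_left_ideal add (fun _ => True) v c.
Proof.
  intros Hu c [->|[w [_ ->]]]; right.
  - exists s. split; auto.
  - exists (w ⊕ s). split; auto. rewrite Hu; ae.
Qed.

Lemma ri_sub u v s : u = v ⊕ s -> forall c,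
  in_right_ideal add (fun _ => True) u c -> in_right_ideal add (fun _ => True) v c.
Proof.
  intros Hu c [->|[w [_ ->]]]; right.
  - exists s. split; auto.
  - exists (s ⊕ w). split; auto. rewrite Hu; ae.
Qed.

Lemma grp_L h u v : grp h u -> grp h v -> Lplus add u v.
Proof.
  intros (_ & Hu1 & Hu2 & yu & Hu3 & Hu4) (_ & Hv1 & Hv2 & yv & Hv3 & Hv4).
  intros c; split.
  - apply (li_sub u v (u ⊕ yv)). rewrite <- aA, Hv4. symmetry; exact Hu2.
  - apply (li_sub v u (v ⊕ yu)). rewrite <- aA, Hu4. symmetry; exact Hv2.
Qed.

Lemma grp_R h u v : grp h u -> grp h v -> Rplus add u v.
Proof.
  intros (_ & Hu1 & Hu2 & yu & Hu3 & Hu4) (_ & Hv1 & Hv2 & yv & Hv3 & Hv4).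
  intros c; split.
  - apply (ri_sub u v (yv ⊕ u)). rewrite aA, Hv3. symmetry; exact Hu1.
  - apply (ri_sub v u (yu ⊕ v)). rewrite aA, Hu3. symmetry; exact Hv1.
Qed.

Lemma aqr_I : add_quasi_regular add.
Proof.
  intros a. destruct (phi_Pe a) as (n & Hn & Hg). exists n. split; [exact Hn|].
  eapply grp_reg; exact Hg.
Qed.

Lemma grp_m a n : 0 < n -> add_regular add (ns n a) -> grp (phi a) (ns n a).
Proof. intros Hn Hr. rewrite <- (phi_ns n a Hn). apply G0, Hr. Qed.

Lemma I_to_II : add_quasi_regular add /\ (forall b, Hstar add (b ⊗ b) b) /\
  (forall a x : T, a = a ⊕ x ⊕ a -> a = a ⊕ nsum add 2 x ⊕ nsum add 2 a) /\
  closed_add add (RegPlus add).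
Proof.
  split; [exact aqr_I|]. split; [|split].
  - intros b.
    destruct (exists_is_m (b ⊗ b) (aqr_I (b ⊗ b))) as [n Hn].
    destruct (exists_is_m b (aqr_I b)) as [m Hm].
    assert (G1 : grp (phi b) (ns n (b ⊗ b))).
    { rewrite <- phi_sq. apply grp_m; apply Hn. }
    assert (G2 : grp (phi b) (ns m b)) by (apply grp_m; apply Hm).
    split; exists n, m; (split; [exact Hn|]); (split; [exact Hm|]).
    + apply (grp_L (phi b)); assumption.
    + apply (grp_R (phi b)); assumption.
  - intros a x Hx.
    change (nsum add 2 x) with (x ⊕ x). change (nsum add 2 a) with (a ⊕ a).
    assert (Hf : a ⊕ x = phi a ⊕ phi x).
    { assert (Hi : a ⊕ x ⊕ (a ⊕ x) = a ⊕ x).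
      { transitivity (a ⊕ x ⊕ a ⊕ x); [ae|]. rewrite <- Hx. reflexivity. }
      rewrite <- (phi_E _ Hi). apply phi_add. }
    assert (Hg : x ⊕ a = phi x ⊕ phi a).
    { assert (Hi : x ⊕ a ⊕ (x ⊕ a) = x ⊕ a).
      { transitivity (x ⊕ (a ⊕ x ⊕ a)); [ae|]. rewrite <- Hx. reflexivity. }
      rewrite <- (phi_E _ Hi). apply phi_add. }
    assert (Hpa : phi a ⊕ phi x ⊕ phi a = phi a).
    { rewrite <- !phi_add. rewrite <- Hx. reflexivity. }
    assert (Ha : phi a ⊕ a = a).
    { destruct (G0 a) as (_ & H1 & _); [exists x; exact Hx | exact H1]. }
    symmetry. transitivity ((a ⊕ x) ⊕ (x ⊕ a) ⊕ a); [ae|]. rewrite Hf, Hg.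
    transitivity (phi a ⊕ (phi x ⊕ phi x) ⊕ phi a ⊕ a); [ae|].
    rewrite (phi_idem x), Hpa. exact Ha.
  - intros a b Ha Hb. apply Hall; assumption.
Qed.

Definition Kc (a b : T) : Prop := rho a b /\ add_regular add b.

Lemma rho_class_add a b c : rho a b -> rho a c -> rho a (b ⊕ c).
Proof.
  intros H1 H2. apply (rho_trans _ (a ⊕ a)); [apply rho_sym, rho_2 | apply rho_add; assumption].
Qed.

Lemma rho_class_mul a b c : rho a b -> rho a c -> rho a (b ⊗ c).
Proof.
  intros H1 H2. apply (rho_trans _ (a ⊗ a)); [apply rho_sym, rho_sq | apply rho_mul; assumption].
Qed.

Lemma rho_phi_eq b c : phi b = phi c -> rho b c.
Proof. intros H. unfold rho. rewrite H. apply rho_refl. Qed.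

Lemma Kc_add a b c : Kc a b -> Kc a c -> Kc a (b ⊕ c).
Proof. intros [H1 H2] [H3 H4]. split; [apply rho_class_add | apply Hall]; assumption. Qed.

Lemma Kc_mul a b c : Kc a b -> Kc a c -> Kc a (b ⊗ c).
Proof. intros [H1 H2] [H3 H4]. split; [apply rho_class_mul; assumption | apply reg_mul_r; assumption]. Qed.

Lemma Kc_creg a b : Kc a b -> cregular_in add mul (Kc a) b.
Proof.
  intros [H1 H2]. pose proof (G0 b H2) as Hg.
  destruct (grp_inv _ _ Hg) as (y & Hy & Hy1 & Hy2).
  exists y. split; [|split; [|split]].
  - split; [|eapply grp_reg; exact Hy].
    apply (rho_trans _ b); [exact H1|]. apply rho_phi_eq. rewrite (phi_grp _ _ Hy). reflexivity.
  - rewrite Hy1. destruct Hg as (_ & Hg1 & _). symmetry; exact Hg1.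
  - congruence.
  - rewrite Hy1. apply phi_abs.
Qed.

Lemma id_sub (P : T -> Prop) b c u v : closed_add add P -> P u -> P v -> b = u ⊕ c ⊕ v ->
  forall w, in_ideal add P b w -> in_ideal add P c w.
Proof.
  intros hP Hu Hv Hb w Hw. right; right; right.
  destruct Hw as [->|[[u1 [Hu1 ->]]|[[v1 [Hv1 ->]]|[u1 [v1 [Hu1 [Hv1 ->]]]]]]].
  - exists u, v. auto.
  - exists (u1 ⊕ u), v. split; [apply hP; auto|]. split; auto. rewrite Hb; ae.
  - exists u, (v ⊕ v1). split; auto. split; [apply hP; auto|]. rewrite Hb; ae.
  - exists (u1 ⊕ u), (v ⊕ v1). split; [apply hP; auto|]. split; [apply hP; auto|].
    rewrite Hb; ae.
Qed.

Lemma Kc_decomp a b c : Kc a b -> Kc a c -> exists u v, Kc a u /\ Kc a v /\ b = u ⊕ c ⊕ v.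
Proof.
  intros [Hb1 Hb2] [Hc1 Hc2].
  pose proof (G0 b Hb2) as Gb. pose proof (G0 c Hc2) as Gc.
  destruct (grp_inv _ _ Gc) as (c' & Gc' & Hc'1 & Hc'2).
  assert (Hbc : rho b c) by (apply (rho_trans _ a); [apply rho_sym|]; assumption).
  destruct Hbc as [Hle _]. unfold le in Hle.
  exists (b ⊕ c'), (phi b). split; [|split].
  - split.
    + apply rho_class_add; [exact Hb1|]. apply (rho_trans _ c); [exact Hc1|].
      apply rho_phi_eq. rewrite (phi_grp _ _ Gc'). reflexivity.
    + apply Hall; [exact Hb2 | eapply grp_reg; exact Gc'].
  - split; [|apply idem_reg, phi_idem].
    apply (rho_trans _ b); [exact Hb1|]. apply rho_phi_eq. rewrite phi_phi. reflexivity.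
  - destruct Gb as (_ & _ & Hb3 & _).
    transitivity (b ⊕ (c' ⊕ c) ⊕ phi b); [|ae]. rewrite Hc'2.
    rewrite <- Hb3 at 1. transitivity (b ⊕ (phi b ⊕ phi c ⊕ phi b)); [rewrite Hle; reflexivity|].
    rewrite !aA, Hb3. reflexivity.
Qed.

Lemma Kc_J a b c : Kc a b -> Kc a c -> Jplus_in add (Kc a) b c.
Proof.
  intros Hb Hc w. split.
  - destruct (Kc_decomp a b c Hb Hc) as (u & v & Hu & Hv & E).
    apply (id_sub _ b c u v); auto. intros x y; apply Kc_add.
  - destruct (Kc_decomp a c b Hc Hb) as (u & v & Hu & Hv & E).
    apply (id_sub _ c b u v); auto. intros x y; apply Kc_add.
Qed.

Lemma I_to_III : blattice_of_nilext_rsr add mul.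
Proof.
  exists rho.
  split; [exact rho_refl|]. split; [exact rho_sym|]. split; [exact rho_trans|].
  split; [exact rho_add|]. split; [exact rho_mul|]. split; [exact rho_sq|].
  split; [exact rho_2|]. split; [exact rho_comm|].
  intros a. split.
  { split; [intros b c; apply rho_class_add | apply rho_class_mul]. }
  exists (Kc a).
  assert (Hsub : subsemiring add mul (Kc a)).
  { split; [intros b c; apply Kc_add | apply Kc_mul]. }
  split; [split|].
  - split; [exact Hsub|]. split; [apply Kc_creg | apply Kc_J].
  - intros e f [He1 He2] [Hf1 Hf2]. split; [apply Kc_add; assumption | apply Eadd; assumption].
  - split; [exact Hsub|]. split; [intros b [H _]; exact H|]. split.
    + intros b x [Hb1 Hb2] Hx.
      assert (Hbx : rho b x) by (apply (rho_trans _ a); [apply rho_sym|]; assumption).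
      destruct Hbx as [Hle _].
      split; [|split; [|split]].
      * split; [apply rho_class_add; assumption | apply reg_add_right; assumption].
      * split; [apply rho_class_add; assumption | apply reg_add_left; assumption].
      * split; [apply rho_class_mul; assumption | apply reg_mul_r; assumption].
      * split; [apply rho_class_mul; assumption | apply reg_mul_l; assumption].
    + intros c Hc. destruct (phi_Pe c) as (n & Hn & Hg). exists n. split; [exact Hn|].
      split; [|eapply grp_reg; exact Hg].
      apply (rho_trans _ c); [exact Hc|]. apply rho_phi_eq. rewrite phi_ns by exact Hn. reflexivity.
Qed.

End PartI.

Section PartII.
Context {T : Type} (add mul : T -> T -> T).
Local Infix "⊕" := add (at level 50, left associativity).
Local Infix "⊗" := mul (at level 40, left associativity).
Hypothesis aA : forall a b c, a ⊕ (b ⊕ c) = a ⊕ b ⊕ c.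
Hypothesis mA : forall a b c, a ⊗ (b ⊗ c) = a ⊗ b ⊗ c.
Hypothesis dL : forall a b c, a ⊗ (b ⊕ c) = a ⊗ b ⊕ a ⊗ c.
Hypothesis dR : forall a b c, (b ⊕ c) ⊗ a = b ⊗ a ⊕ c ⊗ a.
Hypothesis hq : add_quasi_regular add.
Hypothesis hH : forall b, Hstar add (b ⊗ b) b.
Hypothesis h2 : forall a x : T, a = a ⊕ x ⊕ a -> a = a ⊕ nsum add 2 x ⊕ nsum add 2 a.
Hypothesis hR : closed_add add (RegPlus add).

Local Notation ns := (nsum add).
Local Notation grp := (grp add).
Ltac ae := repeat rewrite aA; reflexivity.

Lemma idem_reg2 e : e ⊕ e = e -> add_regular add e.
Proof. intros H. exists e. rewrite !H. reflexivity. Qed.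

Lemma E2 e f : e ⊕ e = e -> f ⊕ f = f -> (e ⊕ f) ⊕ (e ⊕ f) = e ⊕ f.
Proof.
  intros He Hf.
  destruct (hR e f (idem_reg2 e He) (idem_reg2 f Hf)) as [w Hw].
  assert (Hx : e ⊕ f = e ⊕ f ⊕ (f ⊕ w ⊕ e) ⊕ (e ⊕ f)).
  { symmetry. transitivity (e ⊕ (f ⊕ f) ⊕ w ⊕ (e ⊕ e) ⊕ f); [ae|]. rewrite He, Hf.
    transitivity (e ⊕ f ⊕ w ⊕ (e ⊕ f)); [ae | symmetry; exact Hw]. }
  pose proof (h2 _ _ Hx) as H. change (nsum add 2 ?z) with (z ⊕ z) in H.
  assert (K : e ⊕ f ⊕ (f ⊕ w ⊕ e ⊕ (f ⊕ w ⊕ e)) ⊕ (e ⊕ f ⊕ (e ⊕ f)) = (e ⊕ f) ⊕ (e ⊕ f)).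
  { transitivity (e ⊕ (f ⊕ f) ⊕ w ⊕ e ⊕ f ⊕ w ⊕ (e ⊕ e) ⊕ f ⊕ e ⊕ f); [ae|].
    rewrite He, Hf.
    transitivity ((e ⊕ f ⊕ w ⊕ (e ⊕ f)) ⊕ w ⊕ (e ⊕ f) ⊕ (e ⊕ f)); [ae|].
    rewrite <- Hw. rewrite <- Hw. reflexivity. }
  rewrite K in H. symmetry; exact H.
Qed.

Lemma reg_grp2 a : add_regular add a -> exists h, grp h a.
Proof.
  intros [x Hx].
  pose proof (h2 _ _ Hx) as H1. change (nsum add 2 ?z) with (z ⊕ z) in H1.
  assert (Hv : a = (a ⊕ (x ⊕ x)) ⊕ a ⊕ a) by (rewrite H1 at 1; ae).
  assert (Hx' : x ⊕ a ⊕ x = x ⊕ a ⊕ x ⊕ a ⊕ (x ⊕ a ⊕ x)).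
  { symmetry. transitivity (x ⊕ (a ⊕ x ⊕ a) ⊕ x ⊕ a ⊕ x); [ae|]. rewrite <- Hx.
    transitivity (x ⊕ (a ⊕ x ⊕ a) ⊕ x); [ae|]. rewrite <- Hx. reflexivity. }
  pose proof (h2 _ _ Hx') as H2. change (nsum add 2 ?z) with (z ⊕ z) in H2.
  set (x' := x ⊕ a ⊕ x) in *.
  assert (Hax' : a ⊕ x' ⊕ a = a).
  { unfold x'. transitivity ((a ⊕ x ⊕ a) ⊕ x ⊕ a); [ae|]. rewrite <- Hx. symmetry; exact Hx. }
  assert (Hu : a = a ⊕ a ⊕ (x' ⊕ x' ⊕ a)).
  { transitivity (a ⊕ x' ⊕ a); [symmetry; exact Hax'|].
    transitivity (a ⊕ (x' ⊕ (a ⊕ a) ⊕ (x' ⊕ x')) ⊕ a); [rewrite <- H2; reflexivity|].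
    transitivity ((a ⊕ x' ⊕ a) ⊕ a ⊕ x' ⊕ x' ⊕ a); [ae|]. rewrite Hax'. ae. }
  clearbody x'.
  generalize (a ⊕ (x ⊕ x)) Hv; intros v Hv'.
  generalize (x' ⊕ x' ⊕ a) Hu; intros u Hu'.
  clear H1 H2 Hv Hu Hx' Hax'.
  assert (Hpq : v ⊕ a = a ⊕ u).
  { transitivity (v ⊕ (a ⊕ a ⊕ u)); [rewrite <- Hu'; reflexivity|].
    transitivity ((v ⊕ a ⊕ a) ⊕ u); [ae|]. rewrite <- Hv'. reflexivity. }
  exists (a ⊕ u). split; [|split; [|split]].
  - rewrite <- Hpq at 1. transitivity (v ⊕ (a ⊕ a ⊕ u)); [ae|]. rewrite <- Hu'. first [reflexivity | exact Hpq].
  - rewrite <- Hpq. symmetry; exact Hv'.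
  - rewrite aA. symmetry; exact Hu'.
  - exists (v ⊕ a ⊕ u). split.
    + rewrite Hpq. transitivity (a ⊕ a ⊕ u ⊕ u); [ae|]. rewrite <- Hu'. reflexivity.
    + transitivity (v ⊕ (a ⊕ u ⊕ a)); [ae|]. rewrite <- Hpq.
      transitivity (v ⊕ (v ⊕ a ⊕ a)); [ae|]. rewrite <- Hv'. first [reflexivity | exact Hpq].
Qed.

Lemma hh_idem h : h ⊕ h = h -> h ⊗ h = h.
Proof.
  intros Hh.
  assert (Hhh : h ⊗ h ⊕ h ⊗ h = h ⊗ h) by (rewrite <- dR, Hh; reflexivity).
  destruct (hH h) as [[n [m [Hn [Hm HL]]]] [n' [m' [Hn' [Hm' HR]]]]].
  rewrite (ns_idem add n _ Hhh), (ns_idem add m _ Hh) in HL.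
  rewrite (ns_idem add n' _ Hhh), (ns_idem add m' _ Hh) in HR.
  assert (B : h ⊕ h ⊗ h = h).
  { destruct (proj2 (HL h) (or_introl eq_refl)) as [E|[s [_ E]]].
    - rewrite <- E. exact Hh.
    - rewrite E at 1. rewrite <- aA, Hhh. symmetry; exact E. }
  assert (C : h ⊕ h ⊗ h = h ⊗ h).
  { destruct (proj1 (HR (h ⊗ h)) (or_introl eq_refl)) as [E|[s [_ E]]].
    - rewrite E. exact Hh.
    - rewrite E. rewrite aA, Hh. reflexivity. }
  congruence.
Qed.

Lemma II_QCR : quasi_completely_regular add mul.
Proof.
  intros a. destruct (hq a) as [n [Hn Hr]].
  destruct (reg_grp2 _ Hr) as [h Hg].
  set (c := ns n a) in *.
  pose proof Hg as (Hh & H1 & H2 & y & Hy1 & Hy2).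
  assert (Hch : c ⊗ h = h).
  { destruct (hH c) as [[n1 [m1 [Hn1 [Hm1 HL]]]] _].
    assert (GC : grp h (ns m1 c)) by (apply grp_ns; [exact aA | exact Hg | apply Hm1]).
    assert (GC1 : grp h (ns n1 c)) by (apply grp_ns; [exact aA | exact Hg | apply Hn1]).
    destruct GC as (_ & _ & _ & C' & _ & HC').
    destruct GC1 as (_ & G1 & G2 & _).
    rewrite <- (mul_ns_l add mul dL) in HL.
    assert (HD : exists D', D' ⊕ c ⊗ ns n1 c = h).
    { destruct (proj2 (HL (ns m1 c)) (or_introl eq_refl)) as [E|[s [_ E]]].
      - exists C'. rewrite <- E. exact HC'.
      - exists (C' ⊕ s). rewrite <- aA, <- E. exact HC'. }
    destruct HD as [D' HD].
    assert (E1 : c ⊗ ns n1 c ⊕ c ⊗ h = c ⊗ ns n1 c) by (rewrite <- dL, G2; reflexivity).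
    assert (E2' : h ⊕ c ⊗ h = h).
    { rewrite <- HD at 1. rewrite <- aA, E1. exact HD. }
    rewrite <- H1 at 1. rewrite dR, hh_idem by exact Hh. exact E2'. }
  exists n. split; [exact Hn|]. change (nsum add n a) with c.
  exists y. split; [exact I|]. split; [|split].
  - rewrite Hy1. symmetry; exact H1.
  - congruence.
  - rewrite Hy1. exact Hch.
Qed.

Lemma II_to_I : quasi_completely_regular add mul /\ closed_add add (Eplus add (fun _ : T => True)).
Proof.
  split; [exact II_QCR|].
  intros e f [_ He] [_ Hf]. split; [exact I | apply E2; assumption].
Qed.

End PartII.

Lemma III_to_I {T : Type} (add mul : T -> T -> T) :
  blattice_of_nilext_rsr add mul -> quasi_completely_regular add mul.
Proof.
  intros (rho & Hrefl & _ & _ & _ & _ & _ & _ & _ & Hcl) a.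
  destruct (Hcl a) as [_ [K [[[_ [Hcr _]] _] [_ [_ [_ Hnil]]]]]].
  destruct (Hnil a (Hrefl a)) as [n [Hn HK]].
  exists n. split; [exact Hn|].
  destruct (Hcr _ HK) as [x [_ H]]. exists x. split; [exact I | exact H].
Qed.

Theorem theorem3p6 (T : Type) (add mul : T -> T -> T)
  (hS : is_semiring add mul) :
  let E := Eplus add (fun _ : T => True) in
  ((quasi_completely_regular add mul /\ closed_add add E) <->
   (add_quasi_regular add /\
    (forall b, Hstar add (mul b b) b) /\
    (forall a x : T, a = add (add a x) a ->
        a = add (add a (nsum add 2 x)) (nsum add 2 a)) /\
    closed_add add (RegPlus add)))
  /\
  ((quasi_completely_regular add mul /\ closed_add add E) <->
   (blattice_of_nilext_rsr add mul /\ closed_add add E)).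
Proof.
  intros E. destruct hS as (aA & mA & dL & dR).
  split; split.
  - intros [hQ hE]. apply I_to_II; assumption.
  - intros (hq & hH & h2 & hR). apply II_to_I; assumption.
  - intros [hQ hE]. split; [apply I_to_III; assumption | exact hE].
  - intros [hB hE]. split; [apply (III_to_I add mul hB) | exact hE].
Qed.
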